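(* Let $\mathcal{H}(T^2)=\hat{\mathcal{O}}_{\mathbb{Q}}$ be the $\mathbb{C}_q$-module of (possibly infinite) formal sums $\sum_{n,m\in\mathbb{Q}}c_{n,m}Y^nX^m$ with $c_{n,m}\in\mathbb{C}_q$. For $\gamma=\begin{pmatrix} a & b\\ c & d\end{pmatrix}\in SL(2,\mathbb{Z})$ let $\rho(\gamma)$ be the $\mathbb{C}_q$-linear map on $\mathcal{H}(T^2)$ defined termwise on basis elements by $$\rho(\gamma)(Y^nX^m)=q^{-abm^2-2bcmn-cdn^2}\,Y^{bm+dn}X^{am+cn}\qquad(m,n\in\mathbb{Q}).$$ Then this representation of $SL(2,\mathbb{Z})$ on $\mathcal{H}(T^2)$ is faithful: if $\rho(\gamma)=\rho(\gamma')$ then $\gamma=\gamma'$.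
   Context: $\mathbb{C}_q$ denotes the algebraic closure of the field $\mathbb{C}((q))$ of formal Laurent series in $q$. The symbols $Y^nX^m$ ($m,n\in\mathbb{Q}$) are formal basis elements (ordered monomials in the quantum torus with $X^\lambda Y^\mu=q^{-2\lambda\mu}Y^\mu X^\lambda$), and elements of $\hat{\mathcal{O}}_{\mathbb{Q}}$ are arbitrary formal $\mathbb{C}_q$-linear combinations of them, with infinitely many nonzero coefficients allowed; $\rho(\gamma)$ acts coefficientwise on such sums. *)

(* Defs.v *)
From HB Require Import structures.
From mathcomp Require Import all_boot all_order all_algebra.
Set Implicit Arguments. Unset Strict Implicit. Unset Printing Implicit Defensive.
Import Order.TTheory GRing.Theory Num.Theory.
Local Open Scope ring_scope.

(* Coefficient field: an arbitrary field K (instantiated by C_q) together with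
   a choice of rational powers of q, i.e. a group morphism (Q,+) -> K^x,
   r |-> q^r. *)
Definition qpow_hom (K : fieldType) (qpow : rat -> K) : Prop :=
  qpow 0 = 1 /\ forall r s : rat, qpow (r + s) = qpow r * qpow s.

(* Elements of H(T^2) = \hat O_Q : arbitrary formal sums
   sum_{n,m in Q} c_{n,m} Y^n X^m, represented by their coefficient
   function (n, m) |-> c_{n,m}. *)
Definition Hmod (K : fieldType) := rat -> rat -> K.

Definition SL2Z (g : 'M[int]_2) : Prop := \det g = 1.

Definition ea (g : 'M[int]_2) : rat := (g 0 0)%:~R.
Definition eb (g : 'M[int]_2) : rat := (g 0 1)%:~R.
Definition ec (g : 'M[int]_2) : rat := (g 1 0)%:~R.
Definition ed (g : 'M[int]_2) : rat := (g 1 1)%:~R.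

Definition rho_exp (g : 'M[int]_2) (n m : rat) : rat :=
  - (ea g * eb g * m ^+ 2) - 2 * eb g * ec g * m * n - ec g * ed g * n ^+ 2.

(* rho(gamma) acting coefficientwise: the basis element Y^n X^m is sent to
   q^{rho_exp} Y^{bm+dn} X^{am+cn}.  For gamma in SL(2,Z) the exponent map
   (n,m) |-> (bm+dn, am+cn) is a bijection of Q^2 with inverse
   (N,M) |-> (aN - bM, dM - cN), so the coefficient of Y^N X^M in
   rho(gamma)(f) is q^{rho_exp n m} * c_{n,m} for that unique preimage. *)
Definition rho (K : fieldType) (qpow : rat -> K) (g : 'M[int]_2)
    (f : Hmod K) : Hmod K :=
  fun N M =>
    let n := ea g * N - eb g * M in
    let m := ed g * M - ec g * N in
    qpow (rho_exp g n m) * f n m.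

(* Main.v *)
Require Import Defs.
From HB Require Import structures.
From mathcomp Require Import all_boot all_order all_algebra.
Import Order.TTheory GRing.Theory Num.Theory.
Local Open Scope ring_scope.

Lemma qpow_neq0 (K : fieldType) (qpow : rat -> K) :
  qpow_hom qpow -> forall r, qpow r != 0.
Proof.
case=> h0 hD r; apply/eqP => hr.
have := hD r (- r); rewrite subrr h0 hr mul0r => /eqP; by rewrite oner_eq0.
Qed.

Lemma key (K : fieldType) (qpow : rat -> K) (hq : qpow_hom qpow) (g g' : 'M[int]_2) :
  rho qpow g = rho qpow g' -> forall N M : rat,
  ea g * N - eb g * M = ea g' * N - eb g' * M /\
  ed g * M - ec g * N = ed g' * M - ec g' * N.
Proof.
move=> H N M.
pose n0 := ea g * N - eb g * M. pose m0 := ed g * M - ec g * N.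
pose f : Hmod K := fun n m => if (n == n0) && (m == m0) then 1 else 0.
have := congr1 (fun h => h f N M) H; rewrite /rho /f /= -/n0 -/m0 !eqxx /= mulr1.
case: ifP => [/andP[/eqP e1 /eqP e2] _|_]; first by split.
rewrite mulr0 => /eqP; by rewrite (negbTE (@qpow_neq0 _ _ hq _)).
Qed.

Theorem mainTheorem2 (K : fieldType) (qpow : rat -> K)
    (hq : qpow_hom qpow) (g g' : 'M[int]_2) :
  SL2Z g -> SL2Z g' -> rho qpow g = rho qpow g' -> g = g'.
Proof.
move=> _ _ H.
have [h1 h2] := @key _ _ hq _ _ H 1 0.
have [h3 h4] := @key _ _ hq _ _ H 0 1.
rewrite !mulr1 !mulr0 !subr0 !sub0r in h1 h2.
rewrite !mulr1 !mulr0 !subr0 !sub0r in h3 h4.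
move/oppr_inj: h2 => h2; move/oppr_inj: h3 => h3.
move: h1 h2 h3 h4; rewrite /ea /eb /ec /ed => /intr_inj e1 /intr_inj e2 /intr_inj e3 /intr_inj e4.
apply/matrixP => i j.
case: i => [[|[|i]] Hi] //; case: j => [[|[|j]] Hj] //.
- by rewrite (_ : Ordinal Hi = 0); [rewrite (_ : Ordinal Hj = 0) //; apply: val_inj | apply: val_inj].
- by rewrite (_ : Ordinal Hi = 0); [rewrite (_ : Ordinal Hj = 1) //; apply: val_inj | apply: val_inj].
- by rewrite (_ : Ordinal Hi = 1); [rewrite (_ : Ordinal Hj = 0) //; apply: val_inj | apply: val_inj].
- by rewrite (_ : Ordinal Hi = 1); [rewrite (_ : Ordinal Hj = 1) //; apply: val_inj | apply: val_inj].
Qed.
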